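(* Let $a>2$ and $f_a(z)=z\big(z^2+(a-2)z+1-2a\big)$. Let $z_0$ be chosen uniformly at random from $[-a,2]$ and $z_{t+1}=f_a(z_t)$. Then $\lim_{t\to\infty}|z_t|=+\infty$ almost surely. *)

(* Defs.v *)
From HB Require Import structures.
From mathcomp Require Import all_boot all_order all_algebra.
From mathcomp Require Import all_classical all_reals all_analysis.
Set Implicit Arguments. Unset Strict Implicit. Unset Printing Implicit Defensive.
Import Order.TTheory GRing.Theory Num.Theory.
Import numFieldNormedType.Exports.
Local Open Scope ring_scope.

Definition fa (R : realType) (a : R) (z : R) : R :=
  z * (z ^+ 2 + (a - 2) * z + 1 - 2 * a).

(* a > 2 implies -a < 2, needed to build the uniform law on [-a,2] *)
Lemma neg_lt2 (R : realType) (a : R) : 2 < a -> - a < 2.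
Proof.
move=> h; rewrite ltrNl; apply: lt_trans _ h.
by rewrite (@lt_le_trans _ _ 0) // oppr_lt0 ltr0n.
Qed.

(* Main.v *)
Require Import Defs.
From HB Require Import structures.
From mathcomp Require Import all_boot all_order all_algebra.
From mathcomp Require Import all_classical all_reals all_analysis.
From mathcomp Require Import ring lra zify.
Import Order.TTheory GRing.Theory Num.Theory.
Import numFieldNormedType.Exports.
Local Open Scope classical_set_scope.
Local Open Scope ring_scope.
Lemma acos_cont (R : realType) : {within `[-1, 1], continuous (@acos R)}.
Proof.
have := @segment_can_ge_continuous R 0 pi cos acos (pi_ge0 _).
rewrite cospi cos0; apply.
  exact/continuous_subspaceT/continuous_cos.
exact: cosK.
Qed.

Lemma comp_within (R : realType) (A B : set R) (g c : R -> R) :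
  {within A, continuous g} -> (forall y, B y -> A (c y)) -> continuous c ->
  {within B, continuous (g \o c)}.
Proof.
move=> gA cBA cc; apply/subspace_continuousP => x Bx.
have := (@subspace_continuousP _ A _ g).1 gA (c x) (cBA x Bx).
apply: cvg_comp.
move=> P; rewrite /within /= => hP.
have := cc x _ hP.
rewrite nbhs_simpl /=.
apply: filterS => y hy By.
exact: hy (cBA y By).
Qed.
Section S.
Context (R : realType) (a : R) (ha : 2 < a).

Definition dd : R := Num.sqrt (a ^+ 2 - 4).
Definition q1 : R := (- a - dd) / 2.
Definition q2 : R := (- a + dd) / 2.
Definition Qf (t : R) := t ^+ 2 + a * t + 1.
Definition lo (i : nat) : R := if i == 0%N then - a else if i == 1%N then q2 else 1.
Definition hi (i : nat) : R := if i == 0%N then q1 else if i == 1%N then 1 else 2.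
Definition sg (i : nat) : R := if i == 1%N then -1 else 1.
Definition fd (t : R) := (t - 1) * (3 * t + 2 * a - 1).

Lemma dd_facts : [/\ 0 < dd, dd ^+ 2 = a ^+ 2 - 4, dd < a & a - 2 <= dd].
Proof.
have h := ha.
have h4 : 0 < a ^+ 2 - 4 by nra.
have d2 : dd ^+ 2 = a ^+ 2 - 4 by rewrite /dd sqr_sqrtr // ltW.
have d0 : 0 < dd by rewrite /dd sqrtr_gt0.
split => //; nra.
Qed.

Lemma fa_plus t : fa a t + a = (t - 1) ^+ 2 * (t + a).
Proof. rewrite /fa; ring. Qed.

Lemma fa_minus t : 2 - fa a t = (2 - t) * Qf t.
Proof. rewrite /fa /Qf; ring. Qed.

Lemma Qf_fact t : Qf t = (t - q1) * (t - q2).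
Proof.
have [_ d2 _ _] := dd_facts.
apply/eqP; rewrite -subr_eq0.
have -> : Qf t - (t - q1) * (t - q2) = (dd ^+ 2 - (a ^+ 2 - 4)) / 4.
  by rewrite /Qf /q1 /q2; field.
by rewrite d2 subrr mul0r.
Qed.

Lemma q_facts : [/\ - a < q1, q1 < q2, q2 < 0,
   3 * q1 + 2 * a - 1 <= 0 & 0 < 3 * q2 + 2 * a - 1].
Proof.
have h := ha; have [d0 d2 da d2a] := dd_facts.
rewrite /q1 /q2; split; lra.
Qed.

Lemma Qf_le t : - a <= t <= 2 -> Qf t <= 2 * a + 5.
Proof. move=> /andP[h1 h2]; rewrite /Qf; nra. Qed.

Lemma branch_int i t : lo i < t < hi i ->
  [/\ - a < t < 2, - a < fa a t < 2, 0 < Qf t & 0 <= sg i * fd t].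
Proof.
have h := ha; have [d0 d2 da d2a] := dd_facts.
have [p1 p2 p3 p4 p5] := q_facts.
move=> /andP[h1 h2].
have E1 := fa_plus t; have E2 := fa_minus t; have E3 := Qf_fact t.
move: h1 h2; rewrite /lo /hi /sg /fd.
case: i => [|[|i]] /= h1 h2.
- have hQ : 0 < Qf t by rewrite E3; nra.
  have ht : - a < t < 2 by apply/andP; split; lra.
  split => //.
    apply/andP; split.
      have : 0 < (t - 1) ^+ 2 * (t + a) by apply: mulr_gt0; nra.
      lra.
    have : 0 < (2 - t) * Qf t by apply: mulr_gt0; lra.
    lra.
  rewrite mul1r; nra.
- have hQ : 0 < Qf t by rewrite E3; nra.
  have ht : - a < t < 2 by apply/andP; split; lra.
  split => //.
    apply/andP; split.
      have : 0 < (t - 1) ^+ 2 * (t + a) by apply: mulr_gt0; nra.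
      lra.
    have : 0 < (2 - t) * Qf t by apply: mulr_gt0; lra.
    lra.
  nra.
- have hQ : 0 < Qf t by rewrite E3; nra.
  have ht : - a < t < 2 by apply/andP; split; lra.
  split => //.
    apply/andP; split.
      have : 0 < (t - 1) ^+ 2 * (t + a) by apply: mulr_gt0; nra.
      lra.
    have : 0 < (2 - t) * Qf t by apply: mulr_gt0; lra.
    lra.
  rewrite mul1r; nra.
Qed.

Lemma branch_cl i t : lo i <= t <= hi i ->
  - a <= t <= 2 /\ - a <= fa a t <= 2.
Proof.
have h := ha; have [d0 d2 da d2a] := dd_facts.
have [p1 p2 p3 p4 p5] := q_facts.
move=> /andP[h1 h2].
have E1 := fa_plus t; have E2 := fa_minus t; have E3 := Qf_fact t.
have hQ : 0 <= Qf t.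
  move: h1 h2; rewrite E3 /lo /hi; case: i => [|[|i]] /= h1 h2.
  - by apply: mulr_le0; lra.
  - by apply: mulr_ge0; lra.
  - by apply: mulr_ge0; lra.
have ht : - a <= t <= 2.
  move: h1 h2; rewrite /lo /hi; case: i => [|[|i]] /= h1 h2; apply/andP; split; lra.
split => //; case/andP: ht => ht1 ht2; apply/andP; split.
  have : 0 <= (t - 1) ^+ 2 * (t + a) by apply: mulr_ge0; [exact: sqr_ge0 | lra].
  lra.
have : 0 <= (2 - t) * Qf t by apply: mulr_ge0; lra.
lra.
Qed.

Lemma branch_ends i : (fa a (lo i) = - a /\ fa a (hi i) = 2) \/
                      (fa a (lo i) = 2 /\ fa a (hi i) = - a).
Proof.
have e2 t : Qf t = 0 -> fa a t = 2.
  by move=> h; have := fa_minus t; rewrite h mulr0 => /eqP; rewrite subr_eq0 => /eqP.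
have q10 : Qf q1 = 0 by rewrite Qf_fact subrr mul0r.
have q20 : Qf q2 = 0 by rewrite Qf_fact subrr mulr0.
have ea : fa a (- a) = - a by rewrite /fa; ring.
have e1 : fa a 1 = - a by rewrite /fa; ring.
have e22 : fa a 2 = 2 by rewrite /fa; ring.
rewrite /lo /hi; case: i => [|[|i]] /=.
- by left; rewrite ea e2.
- by right; rewrite e2.
- by left.
Qed.

Lemma branch_cover t : - a <= t <= 2 -> - a <= fa a t <= 2 ->
  exists2 i, (i < 3)%N & lo i <= t <= hi i.
Proof.
have h := ha; have [d0 d2 da d2a] := dd_facts.
have [p1 p2 p3 p4 p5] := q_facts.
move=> /andP[h1 h2] /andP[h3 h4].
have E2 := fa_minus t; have E3 := Qf_fact t.
have [tq1|q1t] := lerP t q1.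
  by exists 0%N => //; rewrite /lo /hi /=; apply/andP; split.
have [tq2|q2t] := ltrP t q2.
  have : Qf t < 0 by rewrite E3; nra.
  move=> hQ; exfalso.
  have : 0 < (2 - t) * - Qf t by apply: mulr_gt0; lra.
  nra.
have [t1|t1] := lerP t 1.
  by exists 1%N => //; rewrite /lo /hi /=; apply/andP; split.
by exists 2%N => //; rewrite /lo /hi /=; apply/andP; split; lra.
Qed.


Definition del : R := (a - 2) * (a + 4) / (2 * a + 5).
Definition lam : R := Num.sqrt (9 + del).

Lemma del_ge0 : 0 <= del.
Proof. have h := ha; rewrite /del divr_ge0 //; [apply: mulr_ge0|]; lra. Qed.

Lemma lam_facts : 3 < lam /\ lam ^+ 2 = 9 + del.
Proof.
have h := ha.
have d0 : 0 < del by rewrite /del divr_gt0 //; [apply: mulr_gt0|]; lra.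
have l2 : lam ^+ 2 = 9 + del by rewrite /lam sqr_sqrtr //; lra.
split => //.
have l0 : 0 <= lam by rewrite /lam sqrtr_ge0.
nra.
Qed.

Lemma key_ineq i t : lo i < t < hi i ->
  lam / Num.sqrt ((2 - t) * (t + a)) <=
  sg i * (fd t / Num.sqrt ((2 - fa a t) * (fa a t + a))).
Proof.
move=> hit; have [ht hf hQ hs] := branch_int i t hit.
have h := ha; have [l3 l2] := lam_facts; have d0 := del_ge0.
case/andP: ht => ht1 ht2; case/andP: hf => hf1 hf2.
set A := (2 - t) * (t + a); set B := (2 - fa a t) * (fa a t + a).
have A0 : 0 < A by rewrite /A; apply: mulr_gt0; lra.
have B0 : 0 < B by rewrite /B; apply: mulr_gt0; lra.
have sA := sqrtr_gt0 A; have sB := sqrtr_gt0 B.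
rewrite A0 in sA; rewrite B0 in sB.
rewrite mulrA ler_pdivrMr // mulrAC ler_pdivlMr //.
set s := sg i * fd t.
have hB : B = A * Qf t * (t - 1) ^+ 2.
  by rewrite /B fa_minus fa_plus /A; ring.
have ss : s ^+ 2 = fd t ^+ 2.
  by rewrite /s exprMn /sg; case: ifP => _; rewrite ?sqrrN expr1n mul1r.
have -> : lam * Num.sqrt B = Num.sqrt (lam ^+ 2 * B).
  by rewrite (sqrtrM B (sqr_ge0 lam)) sqrtr_sqr ger0_norm // ltW // (lt_trans _ l3).
have -> : s * Num.sqrt A = Num.sqrt (s ^+ 2 * A).
  by rewrite (sqrtrM A (sqr_ge0 s)) sqrtr_sqr ger0_norm.
rewrite ler_sqrt; last by apply: mulr_ge0; [exact: sqr_ge0 | exact: ltW].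
rewrite ss l2 hB /fd.
have e1 : (3 * t + 2 * a - 1) ^+ 2 - 9 * Qf t = (a - 2) * (3 * t + 4 * a + 4).
  by rewrite /Qf; ring.
have e2 : del * (2 * a + 5) = (a - 2) * (a + 4).
  by rewrite /del; field; lra.
have hQ2 : Qf t <= 2 * a + 5 by apply: Qf_le; apply/andP; split; lra.
have k : (9 + del) * Qf t <= (3 * t + 2 * a - 1) ^+ 2.
  have : del * Qf t <= del * (2 * a + 5) by apply: ler_wpM2l.
  have : (a - 2) * (a + 4) <= (a - 2) * (3 * t + 4 * a + 4).
    by apply: ler_wpM2l; lra.
  lra.
have P0 : 0 <= A * (t - 1) ^+ 2 by apply: mulr_ge0; [exact: ltW | exact: sqr_ge0].
have := ler_wpM2r P0 k.
move=> H; apply: (le_trans _ (le_trans H _)); rewrite le_eqVlt; apply/orP; left; apply/eqP; ring.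
Qed.


Definition u (z : R) := 2 / (a + 2) * z + (a - 2) / (a + 2).
Definition Th (z : R) := - acos (u z).

Lemma a2_gt0 : 0 < a + 2. Proof. by move: ha; lra. Qed.

Lemma u_bnd z : -a < z < 2 -> -1 < u z < 1.
Proof.
move=> /andP[h1 h2]; have h := a2_gt0.
have -> : u z = (2 * z + a - 2) / (a + 2) by rewrite /u; field; lra.
by rewrite ltr_pdivlMr // ltr_pdivrMr //; apply/andP; split; lra.
Qed.

Lemma u_bnd_cl z : -a <= z <= 2 -> -1 <= u z <= 1.
Proof.
move=> /andP[h1 h2]; have h := a2_gt0.
have -> : u z = (2 * z + a - 2) / (a + 2) by rewrite /u; field; lra.
by rewrite ler_pdivlMr // ler_pdivrMr //; apply/andP; split; lra.
Qed.

Lemma Th_der (g : R -> R) (t dg : R) : is_derive t 1 g dg -> -a < g t < 2 ->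
  is_derive t 1 (fun s => Th (g s)) (dg / Num.sqrt ((2 - g t) * (g t + a))).
Proof.
move=> dgt hgt; have hu := u_bnd (g t) hgt; have h := a2_gt0.
pose w := (2 / (a + 2)) *: g + cst ((a - 2) / (a + 2)).
have -> : (fun s => Th (g s)) = - (acos \o w).
  by apply/funext => s; rewrite /Th /w /= /u.
have dw : is_derive t 1 w (2 / (a + 2) *: dg).
  by apply: is_derive_eq; rewrite addr0.
have wt : w t = u (g t) by [].
have da : is_derive (w t) 1 acos (- (Num.sqrt (1 - (w t) ^+ 2))^-1).
  by apply: is_derive1_acos; rewrite wt.
apply: is_derive_eq.
have e1 : 1 - (w t) ^+ 2 = (2 / (a + 2)) ^+ 2 * ((2 - g t) * (g t + a)).
  rewrite wt /u; field; lra.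
have hX : 0 < (2 - g t) * (g t + a).
  case/andP: hgt => ? ?; apply: mulr_gt0; lra.
rewrite e1 sqrtrM ?sqr_ge0 // sqrtr_sqr gtr0_norm ?divr_gt0 //.
rewrite /GRing.scale /=.
field.
by rewrite !gt_eqF // sqrtr_gt0.
Qed.

Lemma u_cont : continuous u.
Proof.
have -> : u = horner ((2 / (a + 2)) *: 'X + ((a - 2) / (a + 2))%:P).
  by apply/funext => z; rewrite /u hornerD hornerZ hornerX hornerC.
exact: continuous_horner.
Qed.

Definition pf : {poly R} := 'X * ('X^2 + (a - 2)%:P * 'X + (1 - 2 * a)%:P).

Lemma fa_poly : fa a = horner pf.
Proof. by apply/funext => z; rewrite /fa /pf !hornerE. Qed.

Lemma fa_der (t : R) : is_derive t 1 (fa a) (fd t).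
Proof.
rewrite fa_poly; apply: is_derive_eq.
rewrite /pf !(derivM, derivD, derivC, derivX, derivXn) !(hornerD, hornerM, hornerC, hornerX, hornerXn, hornerMn, hornerN, horner0) /fd.
rewrite /Algebra.Algebra_add__canonical__SemiGroup_Law /=.
by ring.
Qed.

Lemma fa_cont : continuous (fa a).
Proof. rewrite fa_poly; exact: continuous_horner. Qed.

Lemma Th_cont : {within `[-a, 2], continuous Th}.
Proof.
have H := @comp_within R _ `[-a, 2] _ _ (acos_cont R) ^~ u_cont.
have {}H : {within `[-a, 2], continuous (acos \o u)}.
  apply: H => y; rewrite /= in_itv /= => hy.
  by rewrite in_itv /=; apply: u_bnd_cl.
by move=> x; apply: cvgN; exact: H.
Qed.

Lemma Thf_cont i : {within `[lo i, hi i], continuous (fun s => Th (fa a s))}.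
Proof.
have cuf : continuous (u \o fa a).
  by move=> x; apply: continuous_comp; [exact: fa_cont | exact: u_cont].
have H := @comp_within R _ `[lo i, hi i] _ _ (acos_cont R) ^~ cuf.
have {}H : {within `[lo i, hi i], continuous (acos \o (u \o fa a))}.
  apply: H => y; rewrite /= in_itv /= => hy.
  by rewrite in_itv /=; apply: u_bnd_cl; case: (branch_cl i y hy).
by move=> x; apply: cvgN; exact: H.
Qed.


Definition G (i : nat) (t : R) := sg i * Th (fa a t) - lam * Th t.

Lemma G_der i t : lo i < t < hi i -> is_derive t 1 (G i)
  (sg i * (fd t / Num.sqrt ((2 - fa a t) * (fa a t + a))) -
   lam * (1 / Num.sqrt ((2 - t) * (t + a)))).
Proof.
move=> hit; have [ht hf _ _] := branch_int i t hit.
have d1 := Th_der _ _ _ (fa_der t) hf.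
have d2 := Th_der _ _ _ (is_derive_id t 1) ht.
have -> : G i = sg i *: (fun s => Th (fa a s)) - lam *: (fun s => Th (id s)).
  by apply/funext.
exact: is_deriveB.
Qed.

Lemma G_nd i x y : x \in `[lo i, hi i] -> y \in `[lo i, hi i] -> x <= y ->
  G i x <= G i y.
Proof.
apply: (@ger0_derive1_le_cc R (G i) (lo i) (hi i)).
- by move=> t; rewrite in_itv /= => ht; case: (G_der i t ht).
- move=> t; rewrite in_itv /= => ht; rewrite derive1E.
  case: (G_der i t ht) => _ ->.
  rewrite subr_ge0 mul1r; exact: key_ineq.
- move=> z; apply: cvgB; apply: cvgM; try exact: cvg_cst.
    exact: Thf_cont.
  have sub : `[lo i, hi i] `<=` `[-a, 2].
    by move=> w; rewrite /= !in_itv /= => hw; case: (branch_cl i w hw).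
  have K := continuous_subspaceW sub Th_cont. first [ exact: (K z) | apply: cvg_trans (K z); exact: cvg_id | idtac "NO" ]. 
Qed.


Definition Hl (t : R) := Th t - 2 / (a + 2) * t.

Lemma Hl_nd x y : x \in `[-a, 2] -> y \in `[-a, 2] -> x <= y -> Hl x <= Hl y.
Proof.
have h := a2_gt0.
apply: (@ger0_derive1_le_cc R Hl (-a) 2).
- move=> t; rewrite in_itv /= => ht.
  have d2 := Th_der _ _ _ (is_derive_id t 1) ht.
  have -> : Hl = (fun s => Th (id s)) - (2 / (a + 2)) *: id by apply/funext.
  by case: (is_deriveB d2 (is_deriveZ (2 / (a + 2)) (is_derive_id t 1))).
- move=> t; rewrite in_itv /= => ht; rewrite derive1E.
  have d2 := Th_der _ _ _ (is_derive_id t 1) ht.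
  have -> : Hl = (fun s => Th (id s)) - (2 / (a + 2)) *: id by apply/funext.
  case: (is_deriveB d2 (is_deriveZ (2 / (a + 2)) (is_derive_id t 1))) => _ ->.
  case/andP: ht => ht1 ht2.
  set A := (2 - id t) * (id t + a).
  have A0 : 0 < A by rewrite /A /=; apply: mulr_gt0; lra.
  have sA : 0 < Num.sqrt A by rewrite sqrtr_gt0.
  have sAl : Num.sqrt A <= (a + 2) / 2.
    rewrite -(ger0_norm (_ : 0 <= (a + 2) / 2)); last by lra.
    rewrite -sqrtr_sqr ler_sqrt; last exact: sqr_ge0.
    rewrite /A /=; have := sqr_ge0 (t - (2 - a) / 2); nra.
  have -> : 1 / Num.sqrt A - (2 / (a + 2)) *: 1 =
      ((a + 2) - 2 * Num.sqrt A) / ((a + 2) * Num.sqrt A).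
    rewrite /GRing.scale /=; field.
    by rewrite !gt_eqF.
  apply: divr_ge0; first lra.
  by apply: mulr_ge0; apply: ltW.
- move=> z; apply: cvgB.
    have K := Th_cont. first [ exact: (K z) | apply: cvg_trans (K z); exact: cvg_id ].
  have L : {within `[-a, 2], continuous (fun t : R => 2 / (a + 2) * t)}.
    by apply: continuous_subspaceT => t; apply: cvgM; [exact: cvg_cst | exact: cvg_id].
  first [ exact: (L z) | apply: cvg_trans (L z); exact: cvg_id ].
Qed.

Lemma Th_lb x y : -a <= x -> x <= y -> y <= 2 -> 2 / (a + 2) * (y - x) <= Th y - Th x.
Proof.
move=> h1 h2 h3.
have := Hl_nd x y.
rewrite !in_itv /= h1 h3 (le_trans h1 h2) (le_trans h2 h3) => /(_ isT isT h2).
rewrite /Hl; lra.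
Qed.

Lemma Th_mono x y : -a <= x -> x <= y -> y <= 2 -> Th x <= Th y.
Proof.
move=> h1 h2 h3; have := Th_lb x y h1 h2 h3; have h := a2_gt0.
have : 0 <= 2 / (a + 2) * (y - x) by apply: mulr_ge0; [apply: divr_ge0|]; lra.
lra.
Qed.

Lemma Th_ends : Th (- a) = - pi /\ Th 2 = 0.
Proof.
have h := a2_gt0; rewrite /Th.
have -> : u (- a) = -1 by rewrite /u; field; lra.
have -> : u 2 = 1 by rewrite /u; field; lra.
by rewrite acosN1 acos1 oppr0.
Qed.


Lemma lo_le_hi i : lo i <= hi i.
Proof.
have h := ha; have [p1 p2 p3 p4 p5] := q_facts.
by rewrite /lo /hi; case: i => [|[|i]] /=; lra.
Qed.

Lemma sg_sq i : sg i * sg i = 1.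
Proof. by rewrite /sg; case: ifP => _; rewrite ?mulrNN mulr1. Qed.

Lemma sg_le_norm i z : sg i * z <= `|z|.
Proof.
rewrite /sg; case: ifP => _; last by rewrite mul1r ler_norm.
by rewrite mulN1r -normrN ler_norm.
Qed.

Lemma expand i x y : lo i <= x <= hi i -> lo i <= y <= hi i -> x <= y ->
  lam * (Th y - Th x) <= sg i * (Th (fa a y) - Th (fa a x)).
Proof.
move=> hx hy xy.
have := G_nd i x y.
rewrite !in_itv /= hx hy => /(_ isT isT xy); rewrite /G.
rewrite mulrBr mulrBr; lra.
Qed.

Lemma Th_lb_abs x y : -a <= x <= 2 -> -a <= y <= 2 ->
  2 / (a + 2) * `|y - x| <= `|Th y - Th x|.
Proof.
move=> /andP[x1 x2] /andP[y1 y2].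
case/orP: (le_total x y) => xy.
  rewrite !ger0_norm ?subr_ge0 //; first exact: Th_lb.
  exact: Th_mono.
rewrite (distrC y x) (distrC (Th y) (Th x)).
rewrite !ger0_norm ?subr_ge0 //; first exact: Th_lb.
exact: Th_mono.
Qed.

Lemma expand_abs i x y : lo i <= x <= hi i -> lo i <= y <= hi i ->
  lam * `|Th y - Th x| <= `|Th (fa a y) - Th (fa a x)|.
Proof.
move=> hx hy.
have [bx _] := branch_cl i x hx; have [by' _] := branch_cl i y hy.
case/andP: bx => bx1 bx2; case/andP: by' => by1 by2.
case/orP: (le_total x y) => xy.
  rewrite ger0_norm ?subr_ge0; last exact: Th_mono.
  exact: le_trans (expand i x y hx hy xy) (sg_le_norm _ _).
rewrite (distrC (Th y) (Th x)) (distrC (Th (fa a y)) (Th (fa a x))).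
rewrite ger0_norm ?subr_ge0; last exact: Th_mono.
exact: le_trans (expand i y x hy hx xy) (sg_le_norm _ _).
Qed.

Definition hb (i : nat) (y : R) : R :=
  xget (lo i) [set t | lo i <= t <= hi i /\ fa a t = y].

Lemma hb_in i y : lo i <= hb i y <= hi i.
Proof.
rewrite /hb; case: xgetP => [x _ [] //|_].
by rewrite lexx lo_le_hi.
Qed.

Lemma hb_spec i y : -a <= y <= 2 -> fa a (hb i y) = y.
Proof.
move=> /andP[y1 y2]; have h := ha.
suff : [set t | lo i <= t <= hi i /\ fa a t = y] (hb i y) by case.
apply: xgetPex.
have cf : {within `[lo i, hi i], continuous (fa a)}.
  by apply: continuous_subspaceT; exact: fa_cont.
have [c hc fc] : exists2 c, c \in `[lo i, hi i] & fa a c = y.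
  apply: (@IVT R (fa a) (lo i) (hi i) y (lo_le_hi i) cf).
  case: (branch_ends i) => [[-> ->]|[-> ->]].
    by rewrite min_l ?max_r ?y1 ?y2 //; lra.
  by rewrite min_r ?max_l ?y1 ?y2 //; lra.
by move: hc; rewrite in_itv /= => hc; exists c.
Qed.


Lemma lam_pos : 0 < lam.
Proof. by have [l3 _] := lam_facts; apply: lt_trans l3. Qed.

Lemma hb_fix i x : lo i <= x <= hi i -> hb i (fa a x) = x.
Proof.
move=> hx; have [bx hf] := branch_cl i x hx.
have hy := hb_in i (fa a x); have fy := hb_spec i (fa a x) hf.
have [by' _] := branch_cl i _ hy.
have := expand_abs i x (hb i (fa a x)) hx hy.
rewrite fy subrr normr0 pmulr_rle0 ?lam_pos // normr_le0 subr_eq0 => /eqP e.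
have := Th_lb_abs x (hb i (fa a x)) bx by'.
rewrite e subrr normr0 => H.
have : `|hb i (fa a x) - x| <= 0.
  have h := a2_gt0.
  by rewrite -(pmulr_rle0 _ (_ : 0 < 2 / (a + 2))) // divr_gt0.
by rewrite normr_le0 subr_eq0 => /eqP.
Qed.

Lemma hb_contract i u v : -a <= u <= 2 -> -a <= v <= 2 ->
  lam * `|Th (hb i u) - Th (hb i v)| <= `|Th u - Th v|.
Proof.
move=> hu hv.
have := expand_abs i (hb i v) (hb i u) (hb_in i v) (hb_in i u).
by rewrite !hb_spec.
Qed.

Definition btw (p q x : R) := (x - p) * (x - q) <= 0.

Lemma btw_Th c d y : -a <= c -> d <= 2 -> -a <= d -> c <= 2 ->
  btw c d y -> btw (Th c) (Th d) (Th y).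
Proof.
rewrite /btw => c1 d2 d1 c2 H.
case/orP: (le_total c d) => cd.
  have cy : c <= y by rewrite leNgt; apply/negP => yc; nra.
  have yd : y <= d by rewrite leNgt; apply/negP => yd; nra.
  have t1 := Th_mono c y c1 cy (le_trans yd d2).
  have t2 := Th_mono y d (le_trans c1 cy) yd d2.
  nra.
have cy : d <= y by rewrite leNgt; apply/negP => yc; nra.
have yd : y <= c by rewrite leNgt; apply/negP => yd; nra.
have t1 := Th_mono d y d1 cy (le_trans yd c2).
have t2 := Th_mono y c (le_trans d1 cy) yd c2.
nra.
Qed.

Lemma expand_strict i x y : lo i <= x <= hi i -> lo i <= y <= hi i -> x < y ->
  0 < sg i * (Th (fa a y) - Th (fa a x)).
Proof.
move=> hx hy xy.
have := expand i x y hx hy (ltW xy).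
have [bx _] := branch_cl i x hx; have [by' _] := branch_cl i y hy.
case/andP: bx => bx1 bx2; case/andP: by' => by1 by2.
have := Th_lb x y bx1 (ltW xy) by2.
have h := a2_gt0.
have : 0 < 2 / (a + 2) * (y - x) by apply: mulr_gt0; [apply: divr_gt0|]; lra.
move=> H1 H2 H3; apply: lt_le_trans H3.
apply: mulr_gt0; first exact: lam_pos.
lra.
Qed.

Lemma hb_btw i c d y : -a <= c <= 2 -> -a <= d <= 2 -> -a <= y <= 2 ->
  btw c d y -> btw (hb i c) (hb i d) (hb i y).
Proof.
move=> hc hd hy H.
have fc := hb_spec i c hc; have fd' := hb_spec i d hd; have fy := hb_spec i y hy.
have HT : btw (Th c) (Th d) (Th y).
  case/andP: hc => c1 c2; case/andP: hd => d1 d2; exact: btw_Th.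
have iX := hb_in i c; have iY := hb_in i d; have iZ := hb_in i y.
move: HT; rewrite /btw => HT.
rewrite leNgt; apply/negP => P.
have sq := sg_sq i.
have [zx|xz|e] := ltgtP (hb i y) (hb i c); last first.
- by move: P; rewrite e subrr mul0r ltxx.
- have [zy|yz|e] := ltgtP (hb i y) (hb i d); last first.
  + by move: P; rewrite e subrr mulr0 ltxx.
  + have s1 := expand_strict i _ _ iX iZ xz.
    have s2 := expand_strict i _ _ iY iZ yz.
    rewrite fc fd' fy in s1 s2.
    have := mulr_gt0 s1 s2.
    rewrite mulrACA sq mul1r => H2.
    by move: HT; rewrite leNgt H2.
  + nra.
- have [zy|yz|e] := ltgtP (hb i y) (hb i d); last first.
  + by move: P; rewrite e subrr mulr0 ltxx.
  + nra.
  + have s1 := expand_strict i _ _ iZ iX zx.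
    have s2 := expand_strict i _ _ iZ iY zy.
    rewrite fc fd' fy in s1 s2.
    have := mulr_gt0 s1 s2.
    rewrite mulrACA sq mul1r => H2.
    have e2 : (Th y - Th c) * (Th y - Th d) = (Th c - Th y) * (Th d - Th y) by ring.
    by move: HT; rewrite e2 leNgt H2.
Qed.


Fixpoint ends (n k : nat) : R * R :=
  if n is n'.+1 then
    let e := ends n' (k %/ 3) in (hb (k %% 3) e.1, hb (k %% 3) e.2)
  else (- a, 2).

Lemma ends_in n k : -a <= (ends n k).1 <= 2 /\ -a <= (ends n k).2 <= 2.
Proof.
case: n => [|n] /=.
  have h := ha; split; apply/andP; split; lra.
split; [case: (branch_cl _ _ (hb_in (k %% 3) (ends n (k %/ 3)).1)) |
        case: (branch_cl _ _ (hb_in (k %% 3) (ends n (k %/ 3)).2))] => //.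
Qed.

Lemma ends_len n k : lam ^+ n * `|Th (ends n k).1 - Th (ends n k).2| <= pi.
Proof.
elim: n k => [|n IH] k /=.
  have [-> ->] := Th_ends.
  by rewrite expr0 mul1r subr0 normrN ger0_norm // pi_ge0.
have [h1 h2] := ends_in n (k %/ 3).
have := hb_contract (k %% 3) _ _ h1 h2.
move=> H; have K := IH (k %/ 3)%N; apply: (le_trans _ K).
rewrite exprSr -mulrA; apply: ler_wpM2l => //.
by apply: exprn_ge0; apply: ltW; exact: lam_pos.
Qed.

Lemma cover n x : (forall k, (k <= n)%N -> -a <= iter k (fa a) x <= 2) ->
  exists2 k, (k < 3 ^ n)%N & btw (ends n k).1 (ends n k).2 x.
Proof.
elim: n x => [|n IH] x H.
  exists 0%N => //=; have := H 0%N (leqnn 0); rewrite /btw /= => /andP[h1 h2].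
  nra.
have H' : forall k, (k <= n)%N -> -a <= iter k (fa a) (fa a x) <= 2.
  by move=> k hk; rewrite -iterSr; apply: H.
have [k hk hb'] := IH (fa a x) H'.
have hx := H 0%N isT; have hfx := H 1%N isT.
have [i hi3 hxi] := branch_cover x hx hfx.
exists (i + 3 * k)%N.
  rewrite expnS; lia.
have e1 : ((i + 3 * k) %/ 3 = k)%N by lia.
have e2 : ((i + 3 * k) %% 3 = i)%N by lia.
rewrite /= e1 e2 -(hb_fix i x hxi).
have [h1 h2] := ends_in n k.
exact: hb_btw.
Qed.


Lemma btw_itv p q : [set x | btw p q x] = `[Num.min p q, Num.max p q]%classic.
Proof.
apply/seteqP; split => x /=; rewrite in_itv /= /btw;
  case/orP: (le_total p q) => pq.
- rewrite min_l // max_r // => H; apply/andP; split;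
    rewrite leNgt; apply/negP => h; nra.
- rewrite min_r // max_l // => H; apply/andP; split;
    rewrite leNgt; apply/negP => h; nra.
- by rewrite min_l // max_r // => /andP[h1 h2]; nra.
- by rewrite min_r // max_l // => /andP[h1 h2]; nra.
Qed.

Lemma btw_measure p q : (lebesgue_measure [set x | btw p q x] <= `|p - q|%:E)%E.
Proof.
rewrite btw_itv lebesgue_measure_itv /=.
case: ifP => _; last by rewrite lee_fin.
rewrite -EFinD lee_fin.
case/orP: (le_total p q) => pq.
  by rewrite min_l // max_r // distrC ger0_norm // subr_ge0.
by rewrite min_r // max_l // ger0_norm // subr_ge0.
Qed.

Definition Mb (n : nat) : R := (a + 2) / 2 * (pi / lam ^+ n).

Lemma piece_bound n k :
  (lebesgue_measure [set x | btw (ends n k).1 (ends n k).2 x] <= (Mb n)%:E)%E.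
Proof.
apply: (le_trans (btw_measure _ _)); rewrite lee_fin.
have [h1 h2] := ends_in n k.
have H1 := Th_lb_abs _ _ h2 h1.
have H2 := ends_len n k.
have h := a2_gt0.
have lp : 0 < lam ^+ n by apply: exprn_gt0; exact: lam_pos.
have H3 : `|Th (ends n k).1 - Th (ends n k).2| <= pi / lam ^+ n.
  by rewrite ler_pdivlMr // mulrC.
rewrite /Mb; apply: (le_trans _ (ler_wpM2l _ H3)); last by apply: divr_ge0; lra.
have c0 : 0 <= (a + 2) / 2 by lra.
have := ler_wpM2l c0 H1.
rewrite mulrA (_ : (a + 2) / 2 * (2 / (a + 2)) = 1) ?mul1r //.
by field; lra.
Qed.

Definition Cn (n : nat) : set R :=
  \big[setU/set0]_(k < 3 ^ n) [set x | btw (ends n k).1 (ends n k).2 x].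

Lemma Cn_meas n : measurable (Cn n).
Proof.
apply: bigsetU_measurable => k _.
rewrite btw_itv; exact: measurable_itv.
Qed.

Lemma Cn_bound n : (lebesgue_measure (Cn n) <= (Mb n *+ 3 ^ n)%:E)%E.
Proof.
have mF : forall k, `I_(3 ^ n) k ->
    measurable [set x | btw (ends n k).1 (ends n k).2 x].
  by move=> k _; rewrite btw_itv; exact: measurable_itv.
have H := @content_subadditive _ _ _ lebesgue_measure (Cn n)
  (fun k => [set x | btw (ends n k).1 (ends n k).2 x]) (3 ^ n)%N mF (Cn_meas n).
apply: (le_trans (H (fun x (hx : Cn n x) => hx))).
have S : (\sum_(k < 3 ^ n) lebesgue_measure [set x | btw (ends n k).1 (ends n k).2 x]
    <= \sum_(k < 3 ^ n) (Mb n)%:E)%E.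
  by apply: lee_sum => k _; exact: piece_bound.
apply: (le_trans S).
by rewrite sumEFin sumr_const card_ord.
Qed.


Definition Aset : set R := \bigcap_n Cn n.

Lemma Aset_meas : measurable Aset.
Proof. by apply: bigcapT_measurable => n; exact: Cn_meas. Qed.

Lemma Mb_eq n : Mb n *+ 3 ^ n = (a + 2) / 2 * pi * (3 / lam) ^+ n.
Proof.
have lp : lam ^+ n != 0 by rewrite expf_neq0 // gt_eqF // lam_pos.
rewrite -(mulr_natr (Mb n)) natrX /Mb exprMn exprVn; field.
by rewrite lp.
Qed.

Lemma Aset_null : lebesgue_measure Aset = 0%E.
Proof.
have h := a2_gt0; have [l3 _] := lam_facts; have l0 := lam_pos.
set K := (a + 2) / 2 * pi.
have K0 : 0 < K by rewrite /K; apply: mulr_gt0; [lra | exact: pi_gt0].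
have Hb n : (lebesgue_measure Aset <= (K * (3 / lam) ^+ n)%:E)%E.
  rewrite -Mb_eq; apply: le_trans (Cn_bound n).
  apply: le_measure; rewrite ?inE; [exact: Aset_meas | exact: Cn_meas |].
  by move=> x Hx; exact: Hx n I.
have r1 : `|3 / lam| < 1.
  by rewrite ger0_norm ?divr_ge0 ?ltr_pdivrMr // ?mul1r //; lra.
have cv := cvg_expr r1.
apply/eqP; rewrite eq_le measure_ge0 andbT.
apply/lee_addgt0Pr => e e0; rewrite add0e.
have := cvgr0_norm_lt _ cv (e / K) (divr_gt0 e0 K0).
case=> N _ HN.
have := HN N (leqnn N); rewrite /= => HNe.
apply: (le_trans (Hb N)); rewrite lee_fin.
have : K * (3 / lam) ^+ N <= K * `|(3 / lam) ^+ N| by apply: ler_wpM2l; [exact: ltW | exact: ler_norm].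
move=> H1; apply: (le_trans H1).
by rewrite mulrC -ler_pdivlMr //; exact: ltW.
Qed.


Lemma fa_id z : fa a z = z + z * (z + a) * (z - 2).
Proof. by rewrite /fa; ring. Qed.

Lemma grow_pos y : 2 < y -> forall n : nat,
  y + n%:R * (y * (y + a) * (y - 2)) <= iter n (fa a) y.
Proof.
move=> y2; have h := ha.
have c0 : 0 <= y * (y + a) * (y - 2).
  by apply: mulr_ge0; [apply: mulr_ge0|]; lra.
elim => [|n IH] /=; first by rewrite mul0r addr0.
set z := iter n (fa a) y in IH *.
have yz : y <= z.
  have : 0 <= n%:R * (y * (y + a) * (y - 2)) by apply: mulr_ge0.
  lra.
have m : y * (y + a) * (y - 2) <= z * (z + a) * (z - 2).
  apply: ler_pM; [apply: mulr_ge0; lra | lra | | lra].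
  apply: ler_pM; lra.
rewrite fa_id -natr1 mulrDl mul1r; lra.
Qed.

Lemma grow_neg y : y < - a -> forall n : nat,
  iter n (fa a) y <= y - n%:R * ((- y) * (- y - a) * (2 - y)).
Proof.
move=> y2; have h := ha.
have c0 : 0 <= (- y) * (- y - a) * (2 - y).
  by apply: mulr_ge0; [apply: mulr_ge0|]; lra.
elim => [|n IH] /=; first by rewrite mul0r subr0.
set z := iter n (fa a) y in IH *.
have yz : z <= y.
  have : 0 <= n%:R * ((- y) * (- y - a) * (2 - y)) by apply: mulr_ge0.
  lra.
have m : (- y) * (- y - a) * (2 - y) <= (- z) * (- z - a) * (2 - z).
  apply: ler_pM; [apply: mulr_ge0; lra | lra | | lra].
  apply: ler_pM; lra.
have e : fa a z = z - (- z) * (- z - a) * (2 - z) by rewrite /fa; ring.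
rewrite e -[n.+1%:R]natr1 mulrDl mul1r; lra.
Qed.

Lemma escape x t0 : ~ (-a <= iter t0 (fa a) x <= 2) ->
  (fun t : nat => `| iter t (fa a) x |) @ \oo --> +oo.
Proof.
move=> Ht; set y := iter t0 (fa a) x; have h := ha.
have [c [c0 Hc]] : exists c, 0 < c /\
    forall n : nat, n%:R * c - `|y| <= `|iter n (fa a) y|.
  have ny := ler_norm y; have ny' := ler_norm (- y); rewrite normrN in ny'.
  case: (ltrP 2 y) => [y2|y2].
    exists (y * (y + a) * (y - 2)); split.
      by apply: mulr_gt0; [apply: mulr_gt0|]; lra.
    move=> n; have := grow_pos y y2 n.
    have := ler_norm (iter n (fa a) y); lra.
  have ya : y < - a.
    rewrite ltNge; apply/negP => ya; apply: Ht; rewrite -/y; apply/andP; split => //.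
  exists ((- y) * (- y - a) * (2 - y)); split.
    by apply: mulr_gt0; [apply: mulr_gt0|]; lra.
  move=> n; have := grow_neg y ya n.
  have := ler_norm (- iter n (fa a) y); rewrite normrN; lra.
apply/cvgryPge => A.
pose M := Num.max 0 ((A + `|y|) / c).
have hM : 0 <= M by rewrite /M le_max lexx.
have hb := archi_boundP hM.
exists (t0 + Num.bound M)%N => // t /= hN.
have -> : iter t (fa a) x = iter (t - t0) (fa a) y.
  by rewrite /y -iterD subnK //; apply: leq_trans hN; exact: leq_addr.
apply: le_trans (Hc (t - t0)%N).
have k1 : (Num.bound M)%:R <= (t - t0)%:R :> R.
  by rewrite ler_nat leq_subRL ?(leq_trans (leq_addr _ _) hN).
have k2 : (A + `|y|) / c <= (t - t0)%:R :> R.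
  apply: le_trans k1; apply: le_trans (ltW hb); rewrite /M le_max lexx orbT //.
have : A + `|y| <= (t - t0)%:R * c by rewrite -ler_pdivrMr.
lra.
Qed.

Lemma final_ae : {ae uniform_prob (neg_lt2 ha), forall z0 : R,
     (fun t : nat => `| iter t (fa a) z0 |) @ \oo --> +oo}.
Proof.
exists Aset; split.
- exact: Aset_meas.
- exact: ((null_content_dominatesP _ _).1
    (@dominates_uniform_prob R (-a) 2 (neg_lt2 ha)) Aset Aset_meas Aset_null).
- move=> z /= Hz.
  have Hall : forall t, -a <= iter t (fa a) z <= 2.
    move=> t; apply: contrapT => Ht; apply: Hz; exact: escape z t Ht.
  move=> n _; rewrite /Cn -(bigcup_mkord _ (fun k => [set x | btw (ends n k).1 (ends n k).2 x])).
  have [k hk hbtw] := cover n z (fun k _ => Hall k).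
  by exists k.
Qed.

End S.

Theorem lemma3 (R : realType) (a : R) (ha : 2 < a) :
  {ae uniform_prob (neg_lt2 ha), forall z0 : R,
     (fun t : nat => `| iter t (fa a) z0 |) @ \oo --> +oo}.
Proof. exact: final_ae. Qed.
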